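(* Let $A\in\mathbb{R}^{m\times n}$, let $A^\dagger\in\mathbb{R}^{n\times m}$ be its Moore–Penrose pseudoinverse, and let $\|\cdot\|$ denote the Frobenius norm. (i) The problem $\min_{X\in\mathbb{R}^{n\times m}} \tfrac12\|X\|^2$ subject to $A^\top = A^\top A X$ is equivalent to (has the same $X$-solution as) the problem $\min_{X,\Gamma}\tfrac12\|X-A^\dagger\|^2$ subject to $X = A^\top A\Gamma$. (ii) For any $X_k\in\mathbb{R}^{n\times m}$ and any $S\in\mathbb{R}^{m\times\tau}$ ($\tau$ any positive integer), the problem $$X_{k+1} = \arg\min_X \tfrac12\|X-X_k\|^2 \quad\text{subject to}\quad S^\top A^\top = S^\top A^\top A X$$ is equivalent to (has the same $X$-solution as) the problem $\min_{X,\Gamma}\tfrac12\|X-A^\dagger\|^2$ subject to $X = X_k + A^\top A S\Gamma$. (iii) The solution of the problem in (ii) is given explicitly by $$X_{k+1} = X_k - A^\top A S\,(S^\top A^\top A A^\top A S)^\dagger S^\top A^\top (A X_k - I).$$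
   Context: For a real matrix $M$, $M^\dagger$ denotes its Moore–Penrose pseudoinverse. The Frobenius inner product is $\langle X,Y\rangle=\mathrm{Tr}(X^\top Y)$ and $\|X\|=\sqrt{\mathrm{Tr}(X^\top X)}$. *)

(* Defs.v *)
From HB Require Import structures.
From mathcomp Require Import all_boot all_order all_algebra.
Set Implicit Arguments. Unset Strict Implicit. Unset Printing Implicit Defensive.
Import Order.TTheory GRing.Theory Num.Theory.
Local Open Scope ring_scope.

Definition is_pinv (R : rcfType) (m n : nat) (A : 'M[R]_(m, n)) (P : 'M[R]_(n, m)) : Prop :=
  [/\ A *m P *m A = A, P *m A *m P = P, (A *m P)^T = A *m P & (P *m A)^T = P *m A].

Definition frob_inner (R : rcfType) (m n : nat) (X Y : 'M[R]_(m, n)) : R := \tr (X^T *m Y).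
Definition frob_norm (R : rcfType) (m n : nat) (X : 'M[R]_(m, n)) : R :=
  Num.sqrt (frob_inner X X).

Definition is_argmin (R : rcfType) (T : Type) (feas : T -> Prop) (f : T -> R) (x : T) : Prop :=
  feas x /\ forall y, feas y -> f x <= f y.

(* Main.v *)
Require Import Defs.
From mathcomp Require Import all_boot all_order all_algebra.
Import Order.TTheory GRing.Theory Num.Theory.
Local Open Scope ring_scope.
Set Warnings "-all".

Section Frob.
Variable R : rcfType.

Lemma fi_sum (a b : nat) (X : 'M[R]_(a, b)) :
  frob_inner X X = \sum_k \sum_i X i k * X i k.
Proof.
rewrite /frob_inner /mxtrace; apply: eq_bigr => k _; rewrite mxE.
by apply: eq_bigr => i _; rewrite mxE.
Qed.

Lemma fi_ge0 (a b : nat) (X : 'M[R]_(a, b)) : 0 <= frob_inner X X.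
Proof. by rewrite fi_sum; apply: sumr_ge0 => k _; apply: sumr_ge0 => i _; apply: mulr_ge0_le0 || (rewrite -expr2; apply: sqr_ge0). Qed.

Lemma fi_eq0 (a b : nat) (X : 'M[R]_(a, b)) : frob_inner X X = 0 -> X = 0.
Proof.
rewrite fi_sum => H; apply/matrixP => i k; rewrite mxE.
have H1 := psumr_eq0P (fun k _ => sumr_ge0 _ (fun i _ => (sqr_ge0 (X i k)))) H.
have := H1 k isT.
move=> H2.
have := psumr_eq0P (fun i _ => sqr_ge0 (X i k)) H2 (i := i) isT.
by move/eqP; rewrite mulf_eq0 orbb => /eqP.
Qed.

Lemma fn2 (a b : nat) (X : 'M[R]_(a, b)) : frob_norm X ^+ 2 = frob_inner X X.
Proof. by rewrite /frob_norm sqr_sqrtr // fi_ge0. Qed.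

Lemma fiC (a b : nat) (X Y : 'M[R]_(a, b)) : frob_inner X Y = frob_inner Y X.
Proof. by rewrite /frob_inner -mxtrace_tr trmx_mul trmxK. Qed.

Lemma fiDl (a b : nat) (X Y Z : 'M[R]_(a, b)) :
  frob_inner (X + Y) Z = frob_inner X Z + frob_inner Y Z.
Proof. by rewrite /frob_inner linearD /= mulmxDl mxtraceD. Qed.

Lemma fiDr (a b : nat) (X Y Z : 'M[R]_(a, b)) :
  frob_inner Z (X + Y) = frob_inner Z X + frob_inner Z Y.
Proof. by rewrite fiC fiDl; congr (_ + _); apply: fiC. Qed.

Lemma fiM (a b c : nat) (B : 'M[R]_(a, b)) (G : 'M[R]_(b, c)) (Y : 'M[R]_(a, c)) :
  frob_inner (B *m G) Y = frob_inner G (B^T *m Y).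
Proof. by rewrite /frob_inner trmx_mul -mulmxA. Qed.

Lemma pyth (a b : nat) (U V : 'M[R]_(a, b)) : frob_inner U V = 0 ->
  frob_norm (U + V) ^+ 2 = frob_norm U ^+ 2 + frob_norm V ^+ 2.
Proof.
move=> H; rewrite !fn2 fiDl !fiDr H fiC H; by rewrite addr0 add0r.
Qed.

Lemma range_ex (a p : nat) (B : 'M[R]_(a, p)) :
  exists C : 'M[R]_(p, a), B^T *m B *m C = B^T.
Proof.
have sub : (B <= B^T *m B)%MS.
  rewrite submxE; set K := cokermx _.
  have HK : B^T *m B *m K = 0 by rewrite mulmx_coker.
  apply/eqP; apply: fi_eq0.
  by rewrite fiM mulmxA HK /frob_inner mulmx0 linear0.
case/submxP: sub => D HD; exists D^T.
apply: (can_inj (@trmxK _ _ _)); by rewrite !trmx_mul !trmxK -HD.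
Qed.

End Frob.

Section Proj.
Variable R : rcfType.

Lemma fi0r (a b : nat) (X : 'M[R]_(a, b)) : frob_inner X 0 = 0.
Proof. by rewrite /frob_inner mulmx0 mxtrace0. Qed.

Lemma core1 (a c : nat) (Y Xs Z : 'M[R]_(a, c)) :
  frob_norm (Y - Z) ^+ 2 = frob_norm (Xs - Z) ^+ 2 + frob_norm (Y - Xs) ^+ 2 ->
  2^-1 * frob_norm (Xs - Z) ^+ 2 <= 2^-1 * frob_norm (Y - Z) ^+ 2.
Proof.
move=> H; rewrite H; apply: ler_wpM2l; first by rewrite invr_ge0 ler0n.
by rewrite lerDl fn2 fi_ge0.
Qed.

Lemma core2 (a c : nat) (Y Xs Z : 'M[R]_(a, c)) :
  frob_norm (Y - Z) ^+ 2 = frob_norm (Xs - Z) ^+ 2 + frob_norm (Y - Xs) ^+ 2 ->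
  2^-1 * frob_norm (Y - Z) ^+ 2 <= 2^-1 * frob_norm (Xs - Z) ^+ 2 -> Y = Xs.
Proof.
move=> H; rewrite H ler_pM2l ?invr_gt0 ?ltr0n // gerDl fn2 => H2.
apply/eqP; rewrite -subr_eq0; apply/eqP; apply: fi_eq0.
by apply/le_anti; rewrite H2 fi_ge0.
Qed.

Variables (a p c : nat) (B : 'M[R]_(a, p)) (Q : 'M[R]_a) (C : 'M[R]_(p, a))
  (Xc T : 'M[R]_(a, c)).
Hypothesis HQ1 : Q = B *m C.
Hypothesis HQ2 : B^T *m Q = B^T.

Let Xs := Xc - Q *m (Xc - T).
Let Gs := - (C *m (Xc - T)).

Lemma Xs_eq : Xs = Xc + B *m Gs.
Proof. by rewrite /Xs /Gs mulmxN mulmxA HQ1. Qed.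

Lemma projA X :
  is_argmin (fun X => B^T *m X = B^T *m T) (fun X => 2^-1 * frob_norm (X - Xc) ^+ 2) X
  <-> X = Xc - Q *m (Xc - T).
Proof.
have feas : B^T *m Xs = B^T *m T.
  by rewrite /Xs mulmxBr mulmxA HQ2 mulmxBr opprB addrC subrK.
have key : forall Y, B^T *m Y = B^T *m T ->
    frob_norm (Y - Xc) ^+ 2 = frob_norm (Xs - Xc) ^+ 2 + frob_norm (Y - Xs) ^+ 2.
  move=> Y HY; rewrite -pyth.
    by rewrite [Xs - Xc + _]addrC addrA subrK.
  by rewrite {1}Xs_eq addrAC subrr add0r fiM mulmxBr HY feas subrr fi0r.
split.
  by case=> HX Hm; apply: core2 (key X HX) (Hm _ feas).
move=> ->; split => // y Hy; exact: core1 (key y Hy).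
Qed.

Lemma projB X :
  (exists G : 'M[R]_(p, c),
    is_argmin (fun XG : 'M[R]_(a, c) * 'M[R]_(p, c) => XG.1 = Xc + B *m XG.2)
              (fun XG => 2^-1 * frob_norm (XG.1 - T) ^+ 2) (X, G))
  <-> X = Xc - Q *m (Xc - T).
Proof.
have orth : B^T *m (Xs - T) = 0.
  by rewrite /Xs addrAC mulmxBr mulmxA HQ2 -mulmxBr subrr mulmx0.
have key : forall Y G, Y = Xc + B *m G ->
    frob_norm (Y - T) ^+ 2 = frob_norm (Xs - T) ^+ 2 + frob_norm (Y - Xs) ^+ 2.
  move=> Y G HY; rewrite -pyth.
    by rewrite [Xs - T + _]addrC addrA subrK.
  by rewrite fiC HY {1}Xs_eq opprD addrACA subrr add0r -mulmxBr fiM orth fi0r.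
split.
  case=> G [/= HX Hm]; apply: core2 (key X G HX) _.
  exact: (Hm (Xs, Gs) Xs_eq).
move=> ->; exists Gs; split => //=; first exact: Xs_eq.
case=> y g /= Hy; exact: core1 (key y g Hy).
Qed.

End Proj.

Lemma is_argmin_ext (R : rcfType) (T : Type) (F F' : T -> Prop) (f f' : T -> R) x :
  (forall y, F y <-> F' y) -> (forall y, f y = f' y) ->
  is_argmin F f x <-> is_argmin F' f' x.
Proof.
move=> HF Hf; split; case=> H1 H2; split; first by apply/HF.
- by move=> y /HF Hy; rewrite -!Hf; apply: H2.
- by apply/HF.
- by move=> y /HF Hy; rewrite !Hf; apply: H2.
Qed.

Lemma ex_iff (T : Type) (P P' : T -> Prop) :
  (forall y, P y <-> P' y) -> (exists y, P y) <-> (exists y, P' y).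
Proof. by move=> H; split; case=> y /H Hy; exists y. Qed.

Theorem theorem1 (R : rcfType) (m n : nat) (A : 'M[R]_(m, n)) (Ad : 'M[R]_(n, m)) :
  is_pinv A Ad ->
  (* (i) *)
  (forall X : 'M[R]_(n, m),
     is_argmin (fun X : 'M[R]_(n, m) => A^T = A^T *m A *m X)
               (fun X => 2^-1 * frob_norm X ^+ 2) X
     <->
     exists G : 'M[R]_(n, m),
       is_argmin (fun XG : 'M[R]_(n, m) * 'M[R]_(n, m) => XG.1 = A^T *m A *m XG.2)
                 (fun XG => 2^-1 * frob_norm (XG.1 - Ad) ^+ 2) (X, G))
  /\
  (forall (tau : nat), (0 < tau)%N ->
   forall (Xk : 'M[R]_(n, m)) (S : 'M[R]_(n, tau)),
     (* (ii) *)
     (forall X : 'M[R]_(n, m),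
        is_argmin (fun X : 'M[R]_(n, m) => S^T *m A^T = S^T *m A^T *m A *m X)
                  (fun X => 2^-1 * frob_norm (X - Xk) ^+ 2) X
        <->
        exists G : 'M[R]_(tau, m),
          is_argmin (fun XG : 'M[R]_(n, m) * 'M[R]_(tau, m) =>
                       XG.1 = Xk + A^T *m A *m S *m XG.2)
                    (fun XG => 2^-1 * frob_norm (XG.1 - Ad) ^+ 2) (X, G))
     /\
     (* (iii) *)
     (forall M : 'M[R]_(tau, tau),
        is_pinv (S^T *m A^T *m A *m A^T *m A *m S) M ->
        forall X : 'M[R]_(n, m),
          is_argmin (fun X : 'M[R]_(n, m) => S^T *m A^T = S^T *m A^T *m A *m X)
                    (fun X => 2^-1 * frob_norm (X - Xk) ^+ 2) X
          <->
          X = Xk - A^T *m A *m S *m M *m S^T *m A^T *m (A *m Xk - 1%:M))).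
Proof.
case=> P1 _ P3 _.
have hAt : A^T = A^T *m A *m Ad.
  by rewrite -{1}P1 trmx_mul P3 mulmxA.
have hAt' : A^T *m (A *m Ad) = A^T by rewrite mulmxA -hAt.
split.
  move=> X.
  have hBt : (A^T *m A)^T = A^T *m A by rewrite trmx_mul trmxK.
  have [C HC] := @range_ex R _ _ (A^T *m A).
  have HQ2 : (A^T *m A)^T *m ((A^T *m A) *m C) = (A^T *m A)^T by rewrite mulmxA.
  have EA := @projA R _ _ _ _ _ _ 0 Ad (erefl _) HQ2.
  have EB := @projB R _ _ _ _ _ _ 0 Ad (erefl _) HQ2.
  eapply iff_trans; last first.
    eapply iff_trans; first exact: (EA X).
    eapply iff_trans; first exact: (iff_sym (EB X)).
    apply: ex_iff => G; apply: is_argmin_ext => [y|//].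
    by rewrite /= add0r.
  apply: is_argmin_ext => [y|y]; last by rewrite subr0.
  rewrite hBt -hAt; split=> H; symmetry; exact H.
move=> tau _ Xk S.
set B := A^T *m A *m S.
have hBt : B^T = S^T *m (A^T *m A) by rewrite /B trmx_mul trmx_mul trmxK.
have hS : S^T *m A^T = S^T *m A^T *m A *m Ad by rewrite -!mulmxA hAt'.
have feq : forall y : 'M[R]_(n, m),
    S^T *m A^T = S^T *m A^T *m A *m y <-> B^T *m y = B^T *m Ad.
  move=> y; rewrite hBt !mulmxA -hS; split=> H; symmetry; exact H.
have [C HC] := @range_ex R _ _ B.
split.
  have HQ2 : B^T *m (B *m C) = B^T by rewrite mulmxA.
  have EA := @projA R _ _ _ _ _ _ Xk Ad (erefl _) HQ2.
  have EB := @projB R _ _ _ _ _ _ Xk Ad (erefl _) HQ2.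
  move=> X.
  eapply iff_trans; last first.
    eapply iff_trans; first exact: (EA X).
    exact: (iff_sym (EB X)).
  by apply: is_argmin_ext => [y|//]; apply: feq.
move=> M [M1 _ _ _] X.
have hBB : S^T *m A^T *m A *m A^T *m A *m S = B^T *m B.
  by rewrite hBt /B !mulmxA.
rewrite hBB in M1.
have HQ2 : B^T *m (B *m (M *m B^T)) = B^T.
  by rewrite mulmxA mulmxA -{2}HC mulmxA M1 HC.
have EA := @projA R _ _ _ _ _ _ Xk Ad (erefl _) HQ2.
have E : Xk - B *m (M *m B^T) *m (Xk - Ad) =
          Xk - A^T *m A *m S *m M *m S^T *m A^T *m (A *m Xk - 1%:M).
  congr (_ - _).
  rewrite !mulmxBr mulmx1; congr (_ - _).
    by rewrite hBt /B !mulmxA.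
  by rewrite hBt /B -!mulmxA hAt'.
rewrite -E.
eapply iff_trans; last exact: (EA X).
by apply: is_argmin_ext => [y|//]; apply: feq.
Qed.
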